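(* Let $A$ be the structure matrix of a fully connected $L$-layer ReLU multilayer perceptron (as described in the context) with $m$ weights and $H$ hidden nodes. Then $\operatorname{rank}(A)=m-H$.
   Context: Network: fix $L\ge 2$ and integers $h_0=d,h_1,\dots,h_{L-1},h_L=K\ge 1$. Layer $l$ has nodes $O^l_1,\dots,O^l_{h_l}$; consecutive layers are fully connected by edges $O^{l-1}_i\to O^l_j$ carrying weights $w^l(i,j)$, with no biases, so there are $m=\sum_{l=1}^L h_{l-1}h_l$ edges/weights, indexed $1,\dots,m$. The hidden nodes are the nodes of layers $1,\dots,L-1$; their number is $H=\sum_{l=1}^{L-1}h_l$. Activations are ReLU, $\sigma(t)=\max(t,0)$. Paths and structure matrix: a path is a tuple $(i_0,\dots,i_L)$ with $i_l\in\{1,\dots,h_l\}$, i.e. a choice of one node per layer; it uses the $L$ edges $O^{l-1}_{i_{l-1}}\to O^l_{i_l}$. Represent a path by the vector $p\in\{0,1\}^m$ with $p_e=1$ iff edge $e$ is used by the path. The structure matrix $A$ is the $m\times n$ matrix whose columns are the vectors $p$ of all $n=\prod_{l=0}^L h_l$ paths, and its rank is the maximal number of linearly independent columns over $\mathbb{R}$. (The paper phrases this in the ''generalized linear space'' $(\mathbb{R}\setminus\{0\})^m$ with addition $w\oplus w'=(w_1w'_1,\dots,w_mw'_m)$ and scalar multiplication $\alpha\odot w=(\operatorname{sgn}(w_i)|w_i|^{\ln\alpha})_i$ for $\alpha>0$, encoding a path with entries $e$ on used edges and $1$ elsewhere; linear (in)dependence of path vectors there is the same as real linear (in)dependence of the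 corresponding $0/1$ vectors.) *)

(* Defs.v *)
From HB Require Import structures.
From mathcomp Require Import all_boot all_order all_algebra.
Set Implicit Arguments. Unset Strict Implicit. Unset Printing Implicit Defensive.
Import Order.TTheory GRing.Theory Num.Theory.

(* Network with L layers of weights; node layers are numbered 0..L and
   layer l has h l nodes (h 0 = d, h L = K).  Nodes of layer l are 'I_(h l)
   (0-based). *)

(* An edge/weight: l : 'I_L stands for the edge layer from node layer l
   to node layer l+1 (i.e. the paper's w^{l+1}); (i, j) are the endpoints. *)
Definition edge (L : nat) (h : nat -> nat) : finType :=
  {l : 'I_L & ('I_(h l) * 'I_(h l.+1))%type}.

Definition path_t (L : nat) (h : nat -> nat) : finType :=
  {dffun forall l : 'I_L.+1, 'I_(h l)}.

Definition uses (L : nat) (h : nat -> nat) (p : path_t L h) (e : edge L h) : bool :=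
  let l := tag e in
  (nat_of_ord (p (inord l)) == nat_of_ord (tagged e).1) &&
  (nat_of_ord (p (inord l.+1)) == nat_of_ord (tagged e).2).

Definition structure_matrix (R : nzRingType) (L : nat) (h : nat -> nat)
  : 'M[R]_(#|edge L h|, #|path_t L h|) :=
  \matrix_(e < #|edge L h|, p < #|path_t L h|)
     (if uses (enum_val p) (enum_val e) then 1%R else 0%R).

Definition num_weights (L : nat) (h : nat -> nat) : nat :=
  \sum_(l < L) h l * h l.+1.
Definition num_hidden (L : nat) (h : nat -> nat) : nat :=
  \sum_(1 <= l < L) h l.

(* Main.v *)
Require Import Defs.
From HB Require Import structures.
From mathcomp Require Import all_boot all_order all_algebra.
From mathcomp Require Import lra zify.
Set Implicit Arguments. Unset Strict Implicit. Unset Printing Implicit Defensive.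
Import Order.TTheory GRing.Theory Num.Theory.

Section Net.
Variables (R : realFieldType) (L : nat) (h : nat -> nat).
Hypothesis hpos : forall l, (l <= L)%N -> (0 < h l)%N.
Hypothesis L2 : (2 <= L)%N.

Local Notation E := (edge L h).
Local Notation P := (path_t L h).
Local Open Scope ring_scope.

Definition pv (p : P) (k : nat) : nat := val (p (inord k)).
Definition src (e : E) : nat * nat := (val (tag e), val (tagged e).1).
Definition tgt (e : E) : nat * nat := ((val (tag e)).+1, val (tagged e).2).

Definition U (u : E -> R) (l i j : nat) : R :=
  \sum_(e : E | (src e == (l, i)) && (tgt e == (l.+1, j))) u e.
Definition S (u : E -> R) (p : P) : R := \sum_(e : E) u e * (uses p e)%:R.

Lemma srctgt_inj (e e' : E) : src e = src e' -> tgt e = tgt e' -> e = e'.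
Proof.
case: e => l [i j]; case: e' => l' [i' j'] /=; rewrite /src /tgt /=.
case=> /val_inj El Ei; subst l' => -[] Ej.
by move/val_inj: Ei => ->; move/val_inj: Ej => ->.
Qed.

Lemma Uval u e : U u (src e).1 (src e).2 (tgt e).2 = u e.
Proof.
rewrite /U (bigD1 e) /=; last by rewrite /src /tgt /= !eqxx.
rewrite big1 ?addr0 // => e' /andP[/andP[/eqP Hs /eqP Ht] ne].
case/eqP: ne; apply: srctgt_inj; first by rewrite Hs /src.
by rewrite Ht /tgt /=; congr pair; move: Hs; rewrite /src => -[->].
Qed.

Lemma K u p : S u p = \sum_(l < L) U u l (pv p l) (pv p l.+1).
Proof.
rewrite /U; under eq_bigr do rewrite big_mkcond.
rewrite exchange_big /S; apply: eq_bigr => e _.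
rewrite (bigD1 (tag e)) //= big1 ?addr0.
  rewrite /uses /src /tgt /pv !xpair_eqE !eqxx /=.
  by rewrite [_ == pv _ _]eq_sym [_ == pv _ _.+1]eq_sym; case: (_ && _); rewrite ?mulr1 ?mulr0.
move=> l nl; rewrite /src xpair_eqE.
case: (val (tag e) =P val l) => [/val_inj El|] //=.
by rewrite El eqxx in nl.
Qed.


Lemma pv_lt (p : P) k : (k <= L)%N -> (pv p k < h k)%N.
Proof. by move=> kL; rewrite /pv; case: (p (inord k)) => x /=; rewrite inordK. Qed.

Definition z : P := finfun (fun k : 'I_L.+1 => Ordinal (hpos (ltnSE (ltn_ord k)))).
Definition mkpath (f : nat -> nat) : P :=
  finfun (fun k : 'I_L.+1 => insubd (z k) (f k)).

Lemma pv_mkpath f k : (k <= L)%N -> (f k < h k)%N -> pv (mkpath f) k = f k.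
Proof.
move=> kL fk; rewrite /pv /mkpath ffunE val_insubd.
have -> : (f (inord k : 'I_L.+1) < h (inord k : 'I_L.+1))%N by rewrite inordK.
by rewrite inordK.
Qed.

Definition valid (f : nat -> nat) := forall k, (k <= L)%N -> (f k < h k)%N.

Lemma total u f : valid f ->
  S u (mkpath f) = \sum_(0 <= l < L) U u l (f l) (f l.+1).
Proof.
move=> vf; rewrite K big_mkord; apply: eq_bigr => l _.
rewrite !pv_mkpath //; try apply: vf; by [apply: ltnW | ].
Qed.


Lemma mk_edge l i j : (l < L)%N -> (i < h l)%N -> (j < h l.+1)%N ->
  exists e : E, src e = (l, i) /\ tgt e = (l.+1, j).
Proof.
move=> hl hi hj.
by exists (existT (fun l0 : 'I_L => ('I_(h l0) * 'I_(h l0.+1))%type)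
  (Ordinal hl) (Ordinal hi, Ordinal hj)).
Qed.

Lemma Uat u l i j : (l < L)%N -> (i < h l)%N -> (j < h l.+1)%N ->
  exists e : E, [/\ src e = (l, i), tgt e = (l.+1, j) & U u l i j = u e].
Proof.
move=> hl hi hj; have [e [Hs Ht]] := mk_edge hl hi hj.
by exists e; split=> //; rewrite -Uval Hs Ht.
Qed.

Definition z' k := pv z k.
Lemma valid_z' : valid z'.
Proof. by move=> k kL; apply: pv_lt. Qed.
Definition upd (f : nat -> nat) k0 i := fun k => if k == k0 then i else f k.
Lemma valid_upd f k0 i : valid f -> (k0 <= L -> i < h k0)%N -> valid (upd f k0 i).
Proof.
move=> vf hi k kL; rewrite /upd; case: eqP => [Ek|_]; last exact: vf.
by subst k0; apply: hi.
Qed.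

Section Pot.
Variable u : E -> R.
Hypothesis u0 : forall p, S u p = 0.

Definition g l i := upd z' l i.
Definition pot l i := \sum_(0 <= k < l) U u k (g l i k) (g l i k.+1).

Lemma pot0 i : pot 0 i = 0.
Proof. by rewrite /pot big_geq. Qed.

Lemma potL j : (j < h L)%N -> pot L j = 0.
Proof.
move=> hj; rewrite /pot -total ?u0 //.
by apply: valid_upd; [apply: valid_z' | ].
Qed.

Lemma Ustep l i j : (l < L)%N -> (i < h l)%N -> (j < h l.+1)%N ->
  U u l i j = pot l.+1 j - pot l i.
Proof.
move=> hl hi hj.
pose f1 := upd (g l i) l.+1 j.
have v1 : valid f1 by apply: valid_upd => //; apply: valid_upd => //; apply: valid_z'.
have v2 : valid (g l.+1 j) by apply: valid_upd => //; apply: valid_z'.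
have T1 := total u v1; rewrite u0 (big_cat_nat _ (n:=l)) ?(ltnW hl) // (@big_ltn _ _ _ l L _ hl) in T1.
have T2 := total u v2; rewrite u0 (big_cat_nat _ (n:=l.+1)) // in T2.
have E1 : \sum_(0 <= k < l) U u k (f1 k) (f1 k.+1) = pot l i.
  apply: eq_big_nat => k /andP[_ kl]; rewrite /f1 /upd /g /upd.
  by rewrite eqSS (ltn_eqF kl) (ltn_eqF (leqW kl)).
have E2 : U u l (f1 l) (f1 l.+1) = U u l i j.
  by rewrite /f1 /upd /g /upd eqxx (ltn_eqF (ltnSn l)) eqxx.
have E3 : \sum_(l.+1 <= k < L) U u k (f1 k) (f1 k.+1) =
          \sum_(l.+1 <= k < L) U u k (g l.+1 j k) (g l.+1 j k.+1).
  apply: eq_big_nat => k /andP[lk _]; rewrite /f1 /upd /g /upd.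
  by rewrite eqSS (gtn_eqF lk) (gtn_eqF (leqW lk)).
rewrite E1 E2 E3 in T1.
have P2 : pot l.+1 j = \sum_(0 <= k < l.+1) U u k (g l.+1 j k) (g l.+1 j k.+1) by [].
rewrite -P2 in T2; move: T1 T2.
set T := \sum_(l.+1 <= k < L) _; move=> T1 T2.
simpl in T1, T2; lra.
Qed.

End Pot.

Lemma sum_enum (T : finType) (G : T -> R) :
  \sum_(i < #|T|) G (enum_val i) = \sum_(t : T) G t.
Proof. by rewrite (big_enum_val (A := T)). Qed.

Definition V : finType := {k : 'I_L.-1 & 'I_(h k.+1)}.
Definition hidnat (v : V) : nat * nat := ((nat_of_ord (tag v)).+1, nat_of_ord (tagged v)).

Lemma hidnat_inj : injective hidnat.
Proof.
case=> l i; case=> l' i'; rewrite /hidnat /=.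
case=> /val_inj El Ei.
subst l'.
by move/val_inj: Ei => ->.
Qed.

Definition Cext (c : V -> R) (x : nat * nat) := \sum_(v : V) c v * (hidnat v == x)%:R.

Lemma Cext_hid c v : Cext c (hidnat v) = c v.
Proof.
rewrite /Cext (bigD1 v) //= eqxx mulr1 big1 ?addr0 // => w nw.
by rewrite (inj_eq hidnat_inj) (negbTE nw) mulr0.
Qed.

Lemma Cext_out c x : ((x.1 == 0) || (L <= x.1))%N -> Cext c x = 0.
Proof.
move=> hx; rewrite /Cext big1 // => v _.
case: eqP; rewrite ?mulr0 // => Ev; move: hx; rewrite -Ev /hidnat /=.
have a : (tag v < L - 1)%N by rewrite subn1; exact: ltn_ord.
move=> b; exfalso; have := leq_trans b a; move: L2; lia.
Qed.

Lemma hid_surj k n : (0 < k < L)%N -> (n < h k)%N -> exists v, hidnat v = (k, n).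
Proof.
case: k => [|k] // /andP[_ hk] hn.
have hk' : (k < L.-1)%N by rewrite -subn1; lia.
by exists (existT (fun k : 'I_L.-1 => 'I_(h k.+1)) (Ordinal hk') (Ordinal hn)).
Qed.

Definition Dfun (v : V) (e : E) : R := (hidnat v == tgt e)%:R - (hidnat v == src e)%:R.

Lemma rowD c e : \sum_v c v * Dfun v e = Cext c (tgt e) - Cext c (src e).
Proof. by rewrite /Cext -sumrB; apply: eq_bigr => v _; rewrite mulrBr. Qed.

Lemma tele u (F : nat * nat -> R) :
  (forall n, F (0%N, n) = 0) -> (forall n, F (L, n) = 0) ->
  (forall e, u e = F (tgt e) - F (src e)) -> forall p, S u p = 0.
Proof.
move=> F0 FL Fu p; rewrite K.
rewrite (eq_bigr (fun l : 'I_L => F (l.+1, pv p l.+1) - F (val l, pv p l))).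
  by rewrite -(big_mkord xpredT (fun l => F (l.+1, pv p l.+1) - F (l, pv p l)))
     telescope_sumr // F0 FL subrr.
move=> l _; have hl := ltn_ord l.
have [e [Hs Ht ->]] := Uat u hl (pv_lt p (ltnW hl)) (pv_lt p hl).
by rewrite Fu Hs Ht.
Qed.

Lemma hid_lt v : ((hidnat v).1 < L)%N.
Proof.
rewrite /hidnat /=; move: (tag v) => t; case: t => t /= ht.
by rewrite -subn1 in ht; move: L2 ht; lia.
Qed.

Definition Dm : 'M[R]_(#|V|, #|E|) := \matrix_(i, j) Dfun (enum_val i) (enum_val j).
Local Notation A := (structure_matrix R L h).

Lemma bool01 (b : bool) : (if b then 1 else 0 : R) = b%:R.
Proof. by case: b. Qed.

Lemma mulA_entry (r : 'rV[R]_#|E|) j :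
  (r *m A) 0 j = S (fun e => r 0 (enum_rank e)) (enum_val j).
Proof.
rewrite mxE /S -(@sum_enum E); apply: eq_bigr => k _.
by rewrite !mxE enum_valK bool01.
Qed.

Lemma DA0 : Dm *m A = 0.
Proof.
apply/matrixP => i j; rewrite !mxE.
set v := enum_val i.
have -> : \sum_k Dm i k * A k j = S (Dfun v) (enum_val j).
  rewrite /S -(@sum_enum E); apply: eq_bigr => k _.
  by rewrite !mxE bool01.
apply: (tele (F := fun x => (hidnat v == x)%:R)) => //.
  move=> n; have := hid_lt v.
  by case: (hidnat v) => a b /= hab; rewrite xpair_eqE (ltn_eqF hab).
Qed.

Section Ker.
Variable u : E -> R.
Hypothesis u0 : forall p, S u p = 0.
Definition cpot (v : V) := pot u (hidnat v).1 (hidnat v).2.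

Lemma Cext_pot k n : (k <= L)%N -> (n < h k)%N -> Cext cpot (k, n) = pot u k n.
Proof.
move=> kL hn.
case: (posnP k) => [->|k0]; first by rewrite Cext_out ?pot0.
case: (ltngtP k L) => [kL'|kL'|kE].
- have [v Hv] := hid_surj (k:=k) (n:=n) (introT andP (conj k0 kL')) hn.
  by rewrite -Hv Cext_hid /cpot Hv.
- by rewrite ltnNge kL in kL'.
- by subst k; rewrite Cext_out ?potL //= leqnn orbT.
Qed.

Lemma ker_repr e : u e = Cext cpot (tgt e) - Cext cpot (src e).
Proof.
rewrite -Uval (Ustep u0) /src /tgt /= ?ltn_ord //.
by rewrite !Cext_pot ?ltn_ord // ltnW ?ltn_ord.
Qed.
End Ker.

Lemma ker_sub : (kermx A <= Dm)%MS.
Proof.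
apply/row_subP => i; set r := row i (kermx A).
have r0 : r *m A = 0 by rewrite -row_mul mulmx_ker row0.
clearbody r.
pose u e := r 0 (enum_rank e).
have u0 : forall p, S u p = 0.
  by move=> p; rewrite -[p]enum_rankK -mulA_entry r0 mxE.
apply/submxP; exists (\row_k cpot u (enum_val k)).
apply/rowP => e'; rewrite !mxE.
have -> : \sum_k (\row_k0 cpot u (enum_val k0)) 0 k * Dm k e' =
   \sum_(v : V) cpot u v * Dfun v (enum_val e').
  by rewrite -(@sum_enum V); apply: eq_bigr => k _; rewrite !mxE.
rewrite rowD -ker_repr //.
by rewrite /u enum_valK.
Qed.

Lemma Dm_free : row_free Dm.
Proof.
apply/inj_row_free => w Hw; pose c v := w 0 (enum_rank v).
have He : forall e, Cext c (tgt e) = Cext c (src e).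
  move=> e; have H1 := congr1 (fun M : 'rV[R]_#|E| => M 0 (enum_rank e)) Hw.
  rewrite /= [RHS]mxE mxE in H1.
  apply/eqP; rewrite -subr_eq0 -rowD; apply/eqP; rewrite -[RHS]H1 -(@sum_enum V).
  by apply: eq_bigr => k _; rewrite !mxE /c enum_valK enum_rankK.
have Z : forall k, (k < L)%N -> forall n, (n < h k)%N -> Cext c (k, n) = 0.
  elim=> [|k IH] hk n hn; first by rewrite Cext_out.
  have [e [Hs Ht]] := mk_edge (ltnW hk) (pv_lt z (ltnW (ltnW hk))) hn.
  by rewrite -Ht He Hs; apply: IH; [apply: ltnW | apply: pv_lt; apply: ltnW; apply: ltnW].
apply/rowP => i; rewrite mxE.
have -> : w 0 i = c (enum_val i) by rewrite /c enum_valK.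
rewrite -Cext_hid; apply: Z; [exact: hid_lt | exact: ltn_ord].
Qed.

Lemma rank_main : \rank A = (#|E| - #|V|)%N.
Proof.
have Hk : \rank (kermx A) = \rank Dm.
  apply/eqmx_rank; apply/andP; split; first exact: ker_sub.
  by rewrite sub_kermx DA0.
move: Hk; rewrite mxrank_ker (eqP Dm_free) => <-.
by rewrite subKn // rank_leq_row.
Qed.

Lemma cardE : #|E| = num_weights L h.
Proof.
rewrite /num_weights card_tagged sumnE big_map big_enum /=.
by apply: eq_bigr => l _; rewrite card_prod !card_ord.
Qed.

Lemma cardV : #|V| = num_hidden L h.
Proof.
rewrite /num_hidden card_tagged sumnE big_map big_enum /=.
under eq_bigr do rewrite card_ord.
by rewrite big_add1 /= big_mkord.
Qed.

End Net.

Theorem theorem3p4 (R : realFieldType) (L : nat) (h : nat -> nat) :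
  (2 <= L)%N -> (forall l, (l <= L)%N -> (1 <= h l)%N) ->
  \rank (structure_matrix R L h) = (num_weights L h - num_hidden L h)%N.
Proof.
move=> L2 hpos.
by rewrite (rank_main R hpos L2) cardE cardV.
Qed.
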